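(* Let $\mathcal H$ be a class of complete CAT(0) spaces, and let $H$ be a non-elementary hyperbolic group such that every isometric action of $H$ on any space $X\in\mathcal H$ has a non-empty fixed point set. Let $Q$ be a finitely presented group and let $1\to N\to G\xrightarrow{\pi} Q\to 1$ be a short exact sequence in which $G$ is hyperbolic and $N$ is isomorphic to a quotient group of $H$. Then every minimal isometric action of $G$ on any space $X\in\mathcal H$ factors through $\pi$ (i.e. $N$ acts trivially). Consequently, composing with $\pi$ gives a bijection between minimal isometric actions of $Q$ and minimal isometric actions of $G$ on spaces in $\mathcal H$.
   Context: An isometric action of a group on a complete CAT(0) space $X$ is minimal if $X$ is the only non-empty closed convex invariant subspace. Hyperbolic means word hyperbolic; non-elementary means not virtually cyclic. *)

(* Defs.v *)
From Stdlib Require Import Reals Lra ZArith List Relations.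
Import ListNotations.
Open Scope R_scope.

Record group := Group {
  gcar :> Type;
  gmul : gcar -> gcar -> gcar;
  gone : gcar;
  ginv : gcar -> gcar;
  gmulA : forall x y z, gmul x (gmul y z) = gmul (gmul x y) z;
  gmul1 : forall x, gmul gone x = x;
  gmulV : forall x, gmul (ginv x) x = gone }.

Arguments gmul {g}. Arguments gone {g}. Arguments ginv {g}.

Definition is_hom {G K : group} (f : G -> K) : Prop :=
  forall x y, f (gmul x y) = gmul (f x) (f y).

Definition short_exact {N G Q : group} (i : N -> G) (p : G -> Q) : Prop :=
  is_hom i /\ is_hom p /\ (forall x y, i x = i y -> x = y) /\
  (forall q, exists g, p g = q) /\
  (forall g, p g = gone <-> exists n, i n = g).

(* a letter (s,false) stands for s, (s,true) for s^-1 *)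
Definition gword (G : group) := list (G * bool).

Definition letter_val {G : group} (l : G * bool) : G :=
  if snd l then ginv (fst l) else fst l.

Definition word_eval {G : group} (w : gword G) : G :=
  fold_right (fun l acc => gmul (letter_val l) acc) gone w.

Definition letters_in {G : group} (S : list G) (w : gword G) : Prop :=
  Forall (fun l => In (fst l) S) w.

Definition generates {G : group} (S : list G) : Prop :=
  forall g : G, exists w, letters_in S w /\ word_eval w = g.

Definition word_len {G : group} (S : list G) (g : G) (n : nat) : Prop :=
  (exists w, letters_in S w /\ word_eval w = g /\ length w = n) /\
  (forall w, letters_in S w -> word_eval w = g -> (n <= length w)%nat).

Definition word_dist {G : group} (S : list G) (x y : G) (n : nat) : Prop :=
  word_len S (gmul (ginv x) y) n.

(* word hyperbolic: finitely generated, word metric is Gromov hyperbolic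
   (four-point condition) *)
Definition hyperbolic_group (G : group) : Prop :=
  exists S : list G, generates S /\
  exists delta : R, 0 <= delta /\
  forall (x y z w : G) (nxy nzw nxz nyw nxw nyz : nat),
    word_dist S x y nxy -> word_dist S z w nzw -> word_dist S x z nxz ->
    word_dist S y w nyw -> word_dist S x w nxw -> word_dist S y z nyz ->
    INR nxy + INR nzw <= Rmax (INR nxz + INR nyw) (INR nxw + INR nyz) + 2 * delta.

Fixpoint gpow {G : group} (g : G) (n : nat) : G :=
  match n with O => gone | S m => gmul g (gpow g m) end.

Definition gpowZ {G : group} (g : G) (k : Z) : G :=
  if Z.leb 0 k then gpow g (Z.abs_nat k) else gpow (ginv g) (Z.abs_nat k).

(* virtually cyclic: some cyclic subgroup <g> has finite index *)
Definition virtually_cyclic (G : group) : Prop :=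
  exists (g : G) (reps : list G),
    forall x : G, exists r k, In r reps /\ x = gmul r (gpowZ g k).

Definition non_elementary (G : group) : Prop := ~ virtually_cyclic G.

Inductive pres_step {G : group} (S : list G) (Rl : list (gword G))
  : gword G -> gword G -> Prop :=
| ps_cancel : forall u v x b, In x S ->
    pres_step S Rl (u ++ (x, b) :: (x, negb b) :: v) (u ++ v)
| ps_rel : forall u v r, In r Rl -> pres_step S Rl (u ++ r ++ v) (u ++ v).

Definition finitely_presented (G : group) : Prop :=
  exists (S : list G) (Rl : list (gword G)),
    generates S /\
    Forall (letters_in S) Rl /\
    Forall (fun r => word_eval r = gone) Rl /\
    forall w, letters_in S w -> word_eval w = gone ->
      clos_refl_sym_trans _ (pres_step S Rl) w nil.

Definition metric {X : Type} (d : X -> X -> R) : Prop :=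
  (forall x y, 0 <= d x y) /\ (forall x y, d x y = 0 <-> x = y) /\
  (forall x y, d x y = d y x) /\ (forall x y z, d x z <= d x y + d y z).

Definition converges {X : Type} (d : X -> X -> R) (u : nat -> X) (l : X) : Prop :=
  forall eps, 0 < eps -> exists N, forall n, (N <= n)%nat -> d (u n) l < eps.

Definition cauchy {X : Type} (d : X -> X -> R) (u : nat -> X) : Prop :=
  forall eps, 0 < eps -> exists N, forall m n, (N <= m)%nat -> (N <= n)%nat ->
    d (u m) (u n) < eps.

Definition complete {X : Type} (d : X -> X -> R) : Prop :=
  forall u, cauchy d u -> exists l, converges d u l.

Definition geodesic {X : Type} (d : X -> X -> R) (x y : X) (c : R -> X) : Prop :=
  c 0 = x /\ c (d x y) = y /\
  forall s t, 0 <= s <= d x y -> 0 <= t <= d x y -> d (c s) (c t) = Rabs (s - t).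

Definition geodesic_space {X : Type} (d : X -> X -> R) : Prop :=
  forall x y, exists c, geodesic d x y c.

Definition eucl (p q : R * R) : R :=
  sqrt ((fst p - fst q) ^ 2 + (snd p - snd q) ^ 2).

Definition seg_point (a b : R * R) (L s : R) : R * R :=
  (fst a + (s / L) * (fst b - fst a), snd a + (s / L) * (snd b - snd a)).

(* CAT(0) inequality for the geodesic triangle with sides c1 : [x,y],
   c2 : [y,z], c3 : [z,x] and comparison triangle a b e in R^2 *)
Definition cat0_triangle {X : Type} (d : X -> X -> R) (x y z : X)
  (c1 c2 c3 : R -> X) (a b e : R * R) : Prop :=
  let sides := [(c1, d x y, a, b); (c2, d y z, b, e); (c3, d z x, e, a)] in
  forall (g h : R -> X) (Lg Lh : R) (ga gb ha hb : R * R) (s t : R),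
    In (g, Lg, ga, gb) sides -> In (h, Lh, ha, hb) sides ->
    0 <= s <= Lg -> 0 <= t <= Lh ->
    d (g s) (h t) <= eucl (seg_point ga gb Lg s) (seg_point ha hb Lh t).

Definition CAT0 {X : Type} (d : X -> X -> R) : Prop :=
  metric d /\ geodesic_space d /\
  forall (x y z : X) (c1 c2 c3 : R -> X) (a b e : R * R),
    geodesic d x y c1 -> geodesic d y z c2 -> geodesic d z x c3 ->
    eucl a b = d x y -> eucl b e = d y z -> eucl e a = d z x ->
    cat0_triangle d x y z c1 c2 c3 a b e.

Definition complete_CAT0 {X : Type} (d : X -> X -> R) : Prop :=
  CAT0 d /\ complete d.

Definition isometric_action (G : group) {X : Type} (d : X -> X -> R)
  (act : G -> X -> X) : Prop :=
  (forall x, act gone x = x) /\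
  (forall g h x, act (gmul g h) x = act g (act h x)) /\
  (forall g x y, d (act g x) (act g y) = d x y).

Definition closed_set {X : Type} (d : X -> X -> R) (C : X -> Prop) : Prop :=
  forall u l, (forall n, C (u n)) -> converges d u l -> C l.

Definition convex_set {X : Type} (d : X -> X -> R) (C : X -> Prop) : Prop :=
  forall x y c, C x -> C y -> geodesic d x y c ->
    forall s, 0 <= s <= d x y -> C (c s).

Definition minimal_action (G : group) {X : Type} (d : X -> X -> R)
  (act : G -> X -> X) : Prop :=
  isometric_action G d act /\
  forall C : X -> Prop,
    (exists x, C x) -> closed_set d C -> convex_set d C ->
    (forall g x, C x -> C (act g x)) -> forall x, C x.

Definition space_class := forall X : Type, (X -> X -> R) -> Prop.

(* Main.v *)
Require Import Defs.
From Stdlib Require Import Reals List Relations Lra IndefiniteDescription.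
Open Scope R_scope.

Lemma grp_mulVr (G : group) (x : G) : gmul x (ginv x) = gone.
Proof.
  transitivity (gmul (gmul (ginv (ginv x)) (ginv x)) (gmul x (ginv x))).
  - rewrite gmulV, gmul1. reflexivity.
  - rewrite <- gmulA, (gmulA _ (ginv x) x (ginv x)), gmulV, gmul1, gmulV.
    reflexivity.
Qed.

Lemma hom_one {A B : group} (f : A -> B) : is_hom f -> f gone = gone.
Proof.
  intro Hf. pose proof (Hf gone gone) as E. rewrite gmul1 in E.
  rewrite <- (gmulV _ (f gone)). rewrite E at 3.
  rewrite gmulA, gmulV, gmul1. reflexivity.
Qed.

Lemma geo_unique {X : Type} (d : X -> X -> R) (Hc : CAT0 d) x y c c' :
  geodesic d x y c -> geodesic d x y c' ->
  forall s, 0 <= s <= d x y -> c s = c' s.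
Proof.
  destruct Hc as [[Hpos [Hzero [Hsym Htri]]] [_ Hcat]].
  intros g1 g2 s Hs.
  destruct (Req_dec (d x y) 0) as [HL|HL].
  - assert (s = 0) by lra. subst s.
    destruct g1 as [e1 _], g2 as [e2 _]. congruence.
  - assert (Hyx : d y x = d x y) by apply Hsym.
    assert (Hxx : d x x = 0) by (apply Hzero; reflexivity).
    set (L := d x y) in *.
    pose (c2 := fun t => c' (L - t)).
    pose (c3 := fun _ : R => x).
    assert (G2 : geodesic d y x c2).
    { destruct g2 as [e0 [eL ed]]. unfold c2. split; [|split].
      - replace (L - 0) with L by ring. exact eL.
      - rewrite Hyx. fold L. replace (L - L) with 0 by ring. exact e0.
      - intros s0 t0 Hs0 Ht0. rewrite Hyx in Hs0, Ht0. fold L in Hs0, Ht0.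
        rewrite ed by (unfold L in *; lra).
        replace (L - s0 - (L - t0)) with (-(s0 - t0)) by ring. apply Rabs_Ropp. }
    assert (G3 : geodesic d x x c3).
    { unfold c3. split; [reflexivity|split; [reflexivity|]].
      intros s0 t0 Hs0 Ht0. rewrite Hxx in *.
      replace s0 with 0 by lra. replace t0 with 0 by lra.
      replace (0-0) with 0 by ring. rewrite Rabs_R0. reflexivity. }
    assert (Lpos : 0 <= L) by apply Hpos.
    assert (EL : eucl (0,0) (L,0) = L).
    { unfold eucl; simpl. replace ((0 - L) * ((0 - L) * 1) + (0 - 0) * ((0 - 0) * 1))
        with (L * L) by ring. apply sqrt_square. exact Lpos. }
    assert (EL2 : eucl (L,0) (0,0) = L).
    { unfold eucl; simpl. replace ((L - 0) * ((L - 0) * 1) + (0 - 0) * ((0 - 0) * 1))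
        with (L * L) by ring. apply sqrt_square. exact Lpos. }
    assert (E0 : eucl (0,0) (0,0) = 0).
    { unfold eucl; simpl. replace ((0 - 0) * ((0 - 0) * 1) + (0 - 0) * ((0 - 0) * 1))
        with 0 by ring. apply sqrt_0. }
    pose proof (Hcat x y x c c2 c3 (0,0) (L,0) (0,0) g1 G2 G3) as T.
    specialize (T EL). rewrite Hyx, Hxx in T. specialize (T EL2 E0).
    unfold cat0_triangle in T. cbv zeta in T.
    rewrite Hyx in T. fold L in T.
    specialize (T c c2 L L (0,0) (L,0) (L,0) (0,0) s (L - s)
      (or_introl eq_refl) (or_intror (or_introl eq_refl)) Hs ltac:(lra)).
    unfold c2 in T. replace (L - (L - s)) with s in T by ring.
    assert (Ez : eucl (seg_point (0, 0) (L, 0) L s) (seg_point (L, 0) (0, 0) L (L - s)) = 0).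
    { unfold eucl, seg_point; simpl.
      replace (0 + s / L * (L - 0) - (L + (L - s) / L * (0 - L))) with 0
        by (field; exact HL).
      replace (0 + s / L * (0 - 0) - (0 + (L - s) / L * (0 - 0))) with 0 by ring.
      replace (0 * (0 * 1) + 0 * (0 * 1)) with 0 by ring. apply sqrt_0. }
    rewrite Ez in T. apply Hzero. pose proof (Hpos (c s) (c' s)). lra.
Qed.

Theorem corollary3p3
  (Hcl : space_class)
  (Hcl_cat0 : forall (X : Type) (d : X -> X -> R), Hcl X d -> complete_CAT0 d)
  (H N G Q : group)
  (hypH : hyperbolic_group H) (neH : non_elementary H)
  (fixH : forall (X : Type) (d : X -> X -> R), Hcl X d ->
     forall act : H -> X -> X, isometric_action H d act ->
     exists x : X, forall h : H, act h x = x)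
  (fpQ : finitely_presented Q)
  (i : N -> G) (p : G -> Q) (ses : short_exact i p)
  (hypG : hyperbolic_group G)
  (quotN : exists f : H -> N, is_hom f /\ forall n : N, exists h, f h = n) :
  forall (X : Type) (d : X -> X -> R), Hcl X d ->
    (forall a : G -> X -> X, minimal_action G d a ->
       forall (n : N) (x : X), a (i n) x = x) /\
    (forall b : Q -> X -> X, minimal_action Q d b ->
       minimal_action G d (fun g => b (p g))) /\
    (forall a : G -> X -> X, minimal_action G d a ->
       (exists b : Q -> X -> X, minimal_action Q d b /\
          forall g x, a g x = b (p g) x) /\
       (forall b b' : Q -> X -> X,
          (forall g x, a g x = b (p g) x) -> (forall g x, a g x = b' (p g) x) ->
          forall q x, b q x = b' q x)).
Proof.
  intros X d HX.
  pose proof (Hcl_cat0 X d HX) as [Hcat0 _].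
  pose proof Hcat0 as [[Hpos [Hzero [Hsym Htri]]] _].
  destruct ses as [hi [hp [iinj [psurj pker]]]].
  destruct quotN as [f [hf fsurj]].
  assert (P1 : forall a, minimal_action G d a -> forall n x, a (i n) x = x).
  { intros a [[a1 [aM aI]] amin] n x.
    pose (C := fun y => forall n, a (i n) y = y).
    enough (HC : forall y, C y) by apply HC.
    apply amin.
    - destruct (fixH X d HX (fun h y => a (i (f h)) y)) as [x0 Hx0].
      + split; [|split].
        * intro y. rewrite (hom_one f hf), (hom_one i hi). apply a1.
        * intros g h y. rewrite hf, hi. apply aM.
        * intros; apply aI.
      + exists x0. intro n0. destruct (fsurj n0) as [h <-]. apply Hx0.
    - intros u l Hu Hcv n0. apply Hzero.
      set (D := d (a (i n0) l) l).
      destruct (Req_dec D 0) as [HD|HD]; [exact HD|exfalso].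
      assert (Dp : 0 < D) by (pose proof (Hpos (a (i n0) l) l); unfold D in *; lra).
      destruct (Hcv (D/2)) as [K HK]; [lra|].
      specialize (HK K (le_n K)).
      pose proof (Htri (a (i n0) l) (a (i n0) (u K)) l) as T.
      rewrite aI, (Hu K n0), (Hsym l (u K)) in T. fold D in T. lra.
    - intros y z c Cy Cz Hg s Hs n0.
      assert (Hg' : geodesic d y z (fun t => a (i n0) (c t))).
      { destruct Hg as [g0 [gL gd]]. split; [|split].
        - rewrite g0. apply Cy.
        - rewrite gL. apply Cz.
        - intros; rewrite aI; apply gd; auto. }
      symmetry. exact (geo_unique d Hcat0 y z c _ Hg Hg' s Hs).
    - intros g y Cy n0.
      destruct (proj1 (pker (gmul (ginv g) (gmul (i n0) g)))) as [n1 Hn1].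
      { rewrite hp, hp. rewrite (proj2 (pker (i n0)) (ex_intro _ n0 eq_refl)).
        rewrite gmul1, <- hp, gmulV. apply hom_one; auto. }
      rewrite <- aM. replace (gmul (i n0) g) with (gmul g (i n1)).
      + rewrite aM, Cy; reflexivity.
      + rewrite Hn1, gmulA, grp_mulVr, gmul1. reflexivity. }
  assert (WD : forall a, minimal_action G d a -> forall g g' x, p g = p g' -> a g x = a g' x).
  { intros a Ha g g' x E.
    destruct (proj1 (pker (gmul (ginv g) g'))) as [n Hn].
    { rewrite hp, <- E, <- hp, gmulV. apply hom_one; auto. }
    pose proof (P1 a Ha n x) as Pn.
    destruct Ha as [[a1 [aM aI]] _].
    replace g' with (gmul g (i n)).
    - rewrite aM, Pn. reflexivity.
    - rewrite Hn, gmulA, grp_mulVr, gmul1. reflexivity. }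
  split; [exact P1|split].
  - intros b [[b1 [bM bI]] bmin]. split; [split; [|split]|].
    + intro x. rewrite hom_one by auto. apply b1.
    + intros g h x; rewrite hp; apply bM.
    + intros; apply bI.
    + intros C Cne Ccl Ccv Cinv. apply bmin; auto.
      intros q x Cx. destruct (psurj q) as [g <-]. apply Cinv; auto.
  - intros a Ha. split.
    + pose (sec := fun q => proj1_sig (constructive_indefinite_description _ (psurj q))).
      assert (Hsec : forall q, p (sec q) = q)
        by (intro q; exact (proj2_sig (constructive_indefinite_description _ (psurj q)))).
      pose proof Ha as [[a1 [aM aI]] amin].
      exists (fun q x => a (sec q) x). split.
      * split; [split; [|split]|].
        -- intro x. rewrite (WD a Ha (sec gone) gone x). apply a1.
           rewrite Hsec, hom_one; auto.
        -- intros q1 q2 x. rewrite (WD a Ha (sec (gmul q1 q2)) (gmul (sec q1) (sec q2))).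
           apply aM. rewrite hp, !Hsec; reflexivity.
        -- intros; apply aI.
        -- intros C Cne Ccl Ccv Cinv. apply amin; auto.
           intros g x Cx. rewrite (WD a Ha g (sec (p g))). apply Cinv; auto.
           rewrite Hsec; reflexivity.
      * intros g x. apply WD; [exact Ha|]. rewrite Hsec; reflexivity.
    + intros b b' Eb Eb' q x. destruct (psurj q) as [g <-].
      rewrite <- Eb, <- Eb'. reflexivity.
Qed.
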